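(* Let $m$ and $c$ be positive integers, and for $0\le k\le n$ let $T_{n,k}$ be the number of $(c,m)$-colored $B_n$-partitions with exactly $k$ non-zero-blocks. For every $n\ge 1$, the polynomial $T_n(x)=\sum_{k=0}^n T_{n,k}\,x^k$ has $n$ distinct negative real roots.
   Context: Let $n,m,c$ be positive integers, let $C_1$ be a list of $c$ colors and $C_2$ a list of $m$ colors. A $(c,m)$-colored $B_n$-partition is a set partition $\pi$ of $[n]\cup\{0\}$ together with a coloring of the elements of $[n]$ defined as follows. For $x\in[n]\cup\{0\}$ let $b_x$ be the block of $\pi$ containing $x$. The block $b_0$ is called the zero-block, and every other block is a non-zero-block. Each $x\in[n]$ receives a color according to these rules: if $x=\min b_x$, then $x$ gets the first color of $C_2$; if $x\ne\min b_x$ and $x\in b_0$, then $x$ gets an arbitrary color from $C_1$; if $x\ne \min b_x$ and $x\notin b_0$, then $x$ gets an arbitrary color from $C_2$. Two such objects are equal exactly when they have the same underlying partition and the same coloring. (Note that when $0$ is the minimum of $b_0$, every element of $b_0\setminus\{0\}$ is colored from $C_1$.) *)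

(* Defs.v *)
From mathcomp Require Import all_boot all_order all_algebra.
From mathcomp Require Import reals.
Unset Printing Implicit Defensive.

(* Ground set [n] ∪ {0} is encoded as 'I_n.+1 (element 0 is ord0).
   Colors: a color from C1 is  inl i  (i : 'I_c), a color from C2 is
   inr j (j : 'I_m); the first color of C2 is  inr j  with val j = 0. *)

Definition color (c m : nat) := ('I_c + 'I_m)%type.

Definition is_first_C2 (c m : nat) (a : color c m) : bool :=
  if a is inr j then val j == 0 else false.
Definition is_C1 (c m : nat) (a : color c m) : bool :=
  if a is inl _ then true else false.
Definition is_C2 (c m : nat) (a : color c m) : bool :=
  if a is inr _ then true else false.

Definition is_block_min (n : nat) (P : {set {set 'I_n.+1}}) (x : 'I_n.+1) : bool :=
  [forall y in pblock P x, (x <= y)%N].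

(* Element 0 carries no color in the paper; to get a
   bijective encoding we fix f 0 to be the first color of C2 (0 is always the
   minimum of the zero-block, so the "minimum" rule gives exactly this). *)
Definition colored_Bpartition (c m n : nat)
  (X : {set {set 'I_n.+1}} * {ffun 'I_n.+1 -> color c m}) : bool :=
  let P := X.1 in let f := X.2 in
  partition P [set: 'I_n.+1] &&
  [forall x : 'I_n.+1,
     if is_block_min n P x then is_first_C2 c m (f x)
     else if x \in pblock P ord0 then is_C1 c m (f x)
     else is_C2 c m (f x)].

(* T_{n,k}: number of (c,m)-colored B_n-partitions with exactly k
   non-zero-blocks, i.e. with k+1 blocks in total. *)
Definition T (c m n k : nat) : nat :=
  #|[set X | colored_Bpartition c m n X && (#|X.1| == k.+1)]|.

Local Open Scope ring_scope.

Definition Tpoly (R : realType) (c m n : nat) : {poly R} :=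
  \poly_(k < n.+1) (T c m n k)%:R.

(* Main.v *)
Require Import Defs.
From mathcomp Require Import all_boot all_order all_algebra.
From mathcomp Require Import reals.
From mathcomp Require Import ring polyrcf zify.
Set Implicit Arguments. Unset Strict Implicit. Unset Printing Implicit Defensive.

Section PartA.
Variables (c m n : nat).
Local Notation I := 'I_n.+1.

Definition gP (P : {set {set I}}) (x : I) : I :=
  [arg min_(y < x in pblock P x) (y : nat)].

Lemma gP_spec P x : partition P [set: I] ->
  gP P x \in pblock P x /\ forall y, y \in pblock P x -> (gP P x <= y)%N.
Proof.
move=> hP; have hx : x \in pblock P x by rewrite mem_pblock (cover_partition hP) inE.
rewrite /gP; case: arg_minnP => // z hz hmin; split => //.
Qed.

Lemma gP_uniq P x z : partition P [set: I] -> z \in pblock P x ->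
  (forall y, y \in pblock P x -> (z <= y)%N) -> gP P x = z.
Proof.
move=> hP hz hm; have [h1 h2] := gP_spec x hP.
by apply/val_inj/eqP; rewrite eqn_leq h2 // hm.
Qed.

Lemma pblock_sym P x y : partition P [set: I] ->
  (y \in pblock P x) = (x \in pblock P y).
Proof.
move=> hP; have tP := partition_trivIset hP.
have cP : forall z, z \in cover P by move=> z; rewrite (cover_partition hP) inE.
by rewrite -eq_pblock // -eq_pblock // eq_sym.
Qed.

Lemma pblock_gP P x y : partition P [set: I] ->
  (y \in pblock P x) = (gP P y == gP P x).
Proof.
move=> hP; have tP := partition_trivIset hP.
have cP : forall z, z \in cover P by move=> z; rewrite (cover_partition hP) inE.
apply/idP/eqP => [hy|].
  have e : pblock P y = pblock P x by apply: same_pblock.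
  have [h1 h2] := gP_spec x hP.
  by apply: gP_uniq => //; rewrite e.
move=> e; have [h1 _] := gP_spec y hP; have [h2 _] := gP_spec x hP.
rewrite e in h1.
have e1 : pblock P (gP P x) = pblock P y by apply: same_pblock.
have e2 : pblock P (gP P x) = pblock P x by apply: same_pblock.
by rewrite -e2 e1 mem_pblock.
Qed.

Lemma gP_le P x : partition P [set: I] -> (gP P x <= x)%N.
Proof.
move=> hP; have [_ h] := gP_spec x hP; apply: h.
by rewrite mem_pblock (cover_partition hP) inE.
Qed.

Lemma gP_idem P x : partition P [set: I] -> gP P (gP P x) = gP P x.
Proof. by move=> hP; apply/eqP; rewrite -pblock_gP //; case: (gP_spec x hP). Qed.

Lemma gP_min P x : partition P [set: I] -> is_block_min n P x = (gP P x == x).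
Proof.
move=> hP; apply/forallP/eqP => [h|e y].
  have [h1 h2] := gP_spec x hP; apply/val_inj/eqP; rewrite eqn_leq h2 ?andbT.
    by have := h (gP P x); rewrite h1.
  by rewrite mem_pblock (cover_partition hP) inE.
by apply/implyP => hy; have [_ h2] := gP_spec x hP; rewrite -{1}e h2.
Qed.

Lemma gP_zero P x : partition P [set: I] -> (x \in pblock P ord0) = (gP P x == ord0).
Proof.
move=> hP; rewrite pblock_sym // pblock_gP //.
have -> : gP P ord0 = ord0 by apply/val_inj/eqP; rewrite -leqn0 gP_le.
by [].
Qed.


Definition validg (X : {ffun I -> I} * {ffun I -> color c m}) : bool :=
  [forall x, ((X.1 x <= x)%N) && (X.1 (X.1 x) == X.1 x)] &&
  [forall x, if X.1 x == x then is_first_C2 c m (X.2 x)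
             else if X.1 x == ord0 then is_C1 c m (X.2 x) else is_C2 c m (X.2 x)].

Definition nfix (g : {ffun I -> I}) := #|[set x | g x == x]|.

Definition Phi (X : {set {set I}} * {ffun I -> color c m}) :
  {ffun I -> I} * {ffun I -> color c m} := ([ffun x => gP X.1 x], X.2).

Lemma Phi_valid X : colored_Bpartition c m n X -> validg (Phi X).
Proof.
case/andP => hP /forallP hf; apply/andP; split; apply/forallP => x /=; rewrite !ffunE.
  by rewrite gP_le // gP_idem ?eqxx.
by have := hf x; rewrite gP_min // gP_zero.
Qed.

Lemma card_blocks P : partition P [set: I] -> #|P| = nfix [ffun x => gP P x].
Proof.
move=> hP; rewrite /nfix.
have tP := partition_trivIset hP.
have cP : forall z, z \in cover P by move=> z; rewrite (cover_partition hP) inE.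
have eP : P = pblock P @: [set x | [ffun x => gP P x] x == x].
  apply/setP => B; apply/idP/imsetP => [hB|[x _ ->]]; last by rewrite pblock_mem.
  have /set0Pn [y hy] : B != set0 by apply: (partition_neq0 hP).
  exists (gP P y); first by rewrite inE ffunE gP_idem.
  have e : pblock P y = B by apply: def_pblock.
  by rewrite -e; apply: (same_pblock tP); rewrite pblock_sym //; case: (gP_spec y hP).
rewrite {1}eP; apply: card_in_imset => x y; rewrite !inE !ffunE => /eqP hx /eqP hy e.
have : y \in pblock P x by rewrite e mem_pblock.
by rewrite pblock_gP // hx hy => /eqP.
Qed.

Lemma Phi_inj : {in [set X | colored_Bpartition c m n X] &, injective Phi}.
Proof.
move=> [P f] [Q f'] /[!inE] /andP[hP _] /andP[hQ _] [e1 e2]; congr (_, _) => //=; simpl in *.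
rewrite -(equivalence_partition_pblock hP) -(equivalence_partition_pblock hQ).
rewrite /equivalence_partition; apply: eq_imset => x; apply/setP => y.
rewrite !inE !pblock_gP //.
have h : forall z, gP P z = gP Q z by move=> z; have := congr1 (fun g : {ffun I -> I} => g z) e1; rewrite !ffunE.
by rewrite !h.
Qed.

Lemma Phi_surj X : validg X -> exists2 Y, colored_Bpartition c m n Y & X = Phi Y.
Proof.
case: X => g f /andP [/forallP hg hf].
pose R := fun x y : I => g y == g x.
have eqR : {in [set: I] & &, equivalence_rel R}.
  by move=> x y z _ _ _; rewrite /R eqxx; split=> // /eqP ->.
pose P := equivalence_partition R [set: I].
have hP : partition P [set: I] := equivalence_partitionP eqR.
have hpb : forall x y, (y \in pblock P x) = R x y.
  by move=> x y; apply: pblock_equivalence_partition.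
have eg : forall x, gP P x = g x.
  move=> x; apply: gP_uniq => //; first by rewrite hpb /R; case/andP: (hg x).
  by move=> y; rewrite hpb /R => /eqP <-; case/andP: (hg y).
have eP : [ffun x => gP P x] = g by apply/ffunP => x; rewrite ffunE eg.
exists (P, f); last by rewrite /Phi /= eP.
rewrite /colored_Bpartition /= hP /=; apply/forallP => x.
by rewrite gP_min // gP_zero // eg; move/forallP: hf => /(_ x).
Qed.

Definition Vset j := [set X | validg X && (nfix X.1 == j)].

Lemma T_Vset k : T c m n k = #|Vset k.+1|.
Proof.
rewrite /T -(card_in_imset (f := Phi)); last first.
  by move=> X Y /[!inE] /andP[hX _] /andP[hY _]; apply: Phi_inj; rewrite inE.
apply: eq_card => Z; apply/imsetP/idP => [[X] /[!inE] /andP[hX /eqP hk] ->|].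
  rewrite Phi_valid //=; case/andP: hX => hP _.
  by rewrite -card_blocks // hk.
rewrite inE => /andP [hZ hk]; have [Y hY eZ] := Phi_surj hZ.
exists Y => //; rewrite inE hY /=; case/andP: hY => hP _.
by rewrite card_blocks //; move: hk; rewrite eZ.
Qed.

End PartA.

Lemma card_sum (T : finType) (P : pred T) : #|[set x | P x]| = \sum_x (P x : nat).
Proof. by rewrite -sum1dep_card big_mkcond /=; apply: eq_bigr => x _; case: (P x). Qed.

Section PartB.
Variables (c m n : nat).
Local Notation I := 'I_n.+1.
Local Notation J := 'I_n.+2.
Local Notation lm := (lift (@ord_max n.+1)).

Lemma forall_split (P : pred J) :
  [forall x, P x] = [forall y : I, P (lm y)] && P ord_max.
Proof.
apply/forallP/andP => [h|[/forallP h1 h2] x]; first by split => //; apply/forallP.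
by case: (unliftP ord_max x) => [y ->|->].
Qed.

Lemma card_split (P : pred J) :
  #|[set x | P x]| = (#|[set y : I | P (lm y)]| + P ord_max)%N.
Proof.
rewrite !card_sum big_ord_recr /=; congr (_ + _)%N.
by apply: eq_bigr => i _; congr (nat_of_bool (P _)); apply/val_inj; rewrite [RHS]lift_max.
Qed.

Lemma lm_eq0 (y : I) : (lm y == ord0) = (y == ord0).
Proof. by rewrite -!val_eqE [X in X == _]lift_max. Qed.

Lemma lm_eq (y z : I) : (lm y == lm z) = (y == z).
Proof. by apply/eqP/eqP => [/lift_inj|->]. Qed.

Lemma lm_neq (y : I) : (lm y == ord_max) = false.
Proof. exact: lift_eqF. Qed.

Definition ext (Z : ({ffun I -> I} * {ffun I -> color c m}) * (J * color c m)) :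
  {ffun J -> J} * {ffun J -> color c m} :=
  ([ffun x => if unlift ord_max x is Some y then lm (Z.1.1 y) else Z.2.1],
   [ffun x => if unlift ord_max x is Some y then Z.1.2 y else Z.2.2]).

Arguments ext : simpl never.

Definition condab (X0 : {ffun I -> I} * {ffun I -> color c m}) (ab : J * color c m) :=
  if unlift ord_max ab.1 is Some a0 then
    (X0.1 a0 == a0) && (if a0 == ord0 then is_C1 c m ab.2 else is_C2 c m ab.2)
  else is_first_C2 c m ab.2.

Lemma ext_lm1 Z y : (ext Z).1 (lm y) = lm (Z.1.1 y).
Proof. by rewrite /ext !ffunE liftK. Qed.
Lemma ext_lm2 Z y : (ext Z).2 (lm y) = Z.1.2 y.
Proof. by rewrite /ext !ffunE liftK. Qed.

Lemma ext_max1 Z : (ext Z).1 ord_max = Z.2.1.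
Proof. by rewrite /ext !ffunE unlift_none. Qed.
Lemma ext_max2 Z : (ext Z).2 ord_max = Z.2.2.
Proof. by rewrite /ext !ffunE unlift_none. Qed.

Lemma valid_gen (G : {ffun J -> J}) (F : {ffun J -> color c m}) (g0 : {ffun I -> I}) (f0 : {ffun I -> color c m}) a b :
  (forall y, G (lm y) = lm (g0 y)) -> G ord_max = a ->
  (forall y, F (lm y) = f0 y) -> F ord_max = b ->
  validg (G, F) = validg (g0, f0) && condab (g0, f0) (a, b).
Proof.
move=> h1 h2 h3 h4; rewrite /validg /condab.
rewrite !(forall_split (fun x => _)).
have e1 : [forall y : I, ((G, F).1 (lm y) <= lm y)%N &&
   ((G, F).1 ((G, F).1 (lm y)) == (G, F).1 (lm y))] =
   [forall x, (((g0, f0).1 x <= x)%N) && ((g0, f0).1 ((g0, f0).1 x) == (g0, f0).1 x)].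
  apply: eq_forallb => y; rewrite /= !h1 !lift_max lm_eq /bump.
  by have -> : (n < y)%N = false by rewrite ltnNge -ltnS ltn_ord.
have e2 : [forall y : I, if (G, F).1 (lm y) == lm y
        then is_first_C2 c m ((G, F).2 (lm y))
        else if (G, F).1 (lm y) == ord0
             then is_C1 c m ((G, F).2 (lm y))
             else is_C2 c m ((G, F).2 (lm y))] =
   [forall x, if (g0, f0).1 x == x then is_first_C2 c m ((g0, f0).2 x)
             else if (g0, f0).1 x == ord0 then is_C1 c m ((g0, f0).2 x) else is_C2 c m ((g0, f0).2 x)].
  by apply: eq_forallb => y; rewrite /= h1 h3 lm_eq lm_eq0.
rewrite e1 e2 /= h2 h4 (leq_ord a).
move: h2; case: (unliftP ord_max a) => [a0 ->|->] h2.
  rewrite h1 lm_eq lm_neq lm_eq0.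
  by case: (g0 a0 == a0) => /=; rewrite ?andbF ?andbT // -!andbA; do !bool_congr.
rewrite h2 eqxx /= andbT.
by rewrite -!andbA; do !bool_congr.
Qed.

Lemma valid_ext Z : validg (ext Z) = validg Z.1 && condab Z.1 Z.2.
Proof.
case: Z => [[g0 f0] [a b]].
by rewrite [ext _]surjective_pairing; apply: valid_gen => [y||y|]; rewrite ?ext_lm1 ?ext_lm2 ?ext_max1 ?ext_max2.
Qed.

Lemma nfix_ext Z : nfix (ext Z).1 = (nfix Z.1.1 + (Z.2.1 == ord_max))%N.
Proof.
rewrite /nfix card_split ext_max1; congr (_ + _)%N; apply: eq_card => y.
by rewrite !inE ext_lm1 lm_eq.
Qed.


Lemma ext_inj : injective ext.
Proof.
move=> [[g0 f0] [a b]] [[g1 f1] [a1 b1]] e.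
have h1 y : g0 y = g1 y.
  by have := ext_lm1 (g0, f0, (a, b)) y; rewrite e ext_lm1 => /lift_inj.
have h2 y : f0 y = f1 y.
  by have := ext_lm2 (g0, f0, (a, b)) y; rewrite e ext_lm2.
have h3 := ext_max1 (g0, f0, (a, b)); rewrite e ext_max1 /= in h3.
have h4 := ext_max2 (g0, f0, (a, b)); rewrite e ext_max2 /= in h4.
have eg : g0 = g1 by apply/ffunP => y; exact: h1.
have ef : f0 = f1 by apply/ffunP => y; exact: h2.
by rewrite eg ef h3 h4.
Qed.

Lemma ext_surj (X : {ffun J -> J} * {ffun J -> color c m}) : validg X ->
  exists Z, X = ext Z.
Proof.
case: X => G F /andP [/forallP hg _].
have hlt y : (G (lm y) < n.+1)%N.
  by case/andP: (hg (lm y)) => h _; rewrite (leq_ltn_trans h) // lift_max.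
exists (([ffun y => inord (G (lm y))], [ffun y => F (lm y)]), (G ord_max, F ord_max)).
congr (_, _); apply/ffunP => x; rewrite !ffunE;
  case: (unliftP ord_max x) => [y ->|->] //; rewrite ffunE //.
by apply/val_inj; rewrite [RHS]/= inordK // /bump leqNgt hlt.
Qed.

Definition Sset j := [set Z | validg Z.1 && condab Z.1 Z.2 &&
  (nfix Z.1.1 + (Z.2.1 == ord_max) == j)].

Lemma Vset_ext j : Vset c m n.+1 j = ext @: Sset j.
Proof.
apply/setP => X; rewrite inE; apply/idP/imsetP => [/andP [hX hj]|[Z]].
  have [Z eZ] := ext_surj hX; exists Z => //.
  by rewrite inE -valid_ext -nfix_ext -eZ hX.
by rewrite inE => hZ ->; rewrite valid_ext nfix_ext.
Qed.

Lemma sum_split (F : J -> nat) :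
  (\sum_(x : J) F x = \sum_(y : I) F (lm y) + F ord_max)%N.
Proof.
rewrite big_ord_recr /=; congr (_ + _)%N.
by apply: eq_bigr => i _; congr (F _); apply/val_inj; rewrite [RHS]lift_max.
Qed.

Lemma sum_C1 : (\sum_(b : color c m) is_C1 c m b = c)%N.
Proof.
by rewrite big_sumType /= big_const_ord iter_addn_0 mul1n big1 // addn0.
Qed.

Lemma sum_C2 : (\sum_(b : color c m) is_C2 c m b = m)%N.
Proof.
by rewrite big_sumType /= big_const_ord iter_addn_0 big_const_ord iter_addn_0 mul1n.
Qed.

Lemma sum_first : (0 < m)%N -> (\sum_(b : color c m) is_first_C2 c m b = 1)%N.
Proof.
case: m => // m' _; rewrite big_sumType /= big1 // add0n big_ord_recl /= big1 //.
Qed.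


Lemma sum_fix (g0 : {ffun I -> I}) : g0 ord0 = ord0 ->
  (\sum_(y : I) (g0 y == y) * (if y == ord0 then c else m) = c + m * (nfix g0).-1)%N.
Proof.
move=> h0; rewrite (bigD1 ord0) //= h0 eqxx mul1n; congr (_ + _)%N.
rewrite (eq_bigr (fun y => (g0 y == y) * m)%N) => [|y /negbTE -> //].
rewrite -big_distrl /= mulnC; congr (_ * _)%N.
by rewrite /nfix card_sum [in RHS](bigD1 ord0) //= h0 eqxx /=.
Qed.

Lemma inner (g0 : {ffun I -> I}) f0 j : (0 < m)%N -> g0 ord0 = ord0 ->
  (\sum_(ab : J * color c m) (condab (g0, f0) ab && (nfix g0 + (ab.1 == ord_max) == j))
   = (nfix g0 == j) * (c + m * (nfix g0).-1) + (nfix g0 + 1 == j))%N.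
Proof.
move=> hm h0.
transitivity (\sum_(a : J) \sum_(b : color c m)
   (condab (g0, f0) (a, b) && (nfix g0 + (a == ord_max) == j) : nat))%N.
  by rewrite pair_bigA; apply: eq_bigr => -[a b].
rewrite sum_split; congr (_ + _)%N.
  rewrite -sum_fix // big_distrr /=; apply: eq_bigr => y _.
  rewrite /condab /= liftK lm_neq addn0.
  case: (g0 y == y); case: (nfix g0 == j); rewrite /= ?muln0 ?mul0n;
    try (by rewrite big1 // => b _; rewrite ?andbF).
  case: (y == ord0) => /=; rewrite !mul1n; [rewrite -[in RHS]sum_C1 | rewrite -[in RHS]sum_C2];
    by apply: eq_bigr => b _; rewrite andbT.
rewrite eqxx; case: (nfix g0 + 1 == j) => /=.
  by rewrite -(sum_first hm); apply: eq_bigr => b _; rewrite /condab /= unlift_none andbT.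
by rewrite big1 // => b _; rewrite andbF.
Qed.


Lemma valid0 (X : {ffun I -> I} * {ffun I -> color c m}) : validg X -> X.1 ord0 = ord0.
Proof.
case/andP => /forallP /(_ ord0) /andP [h _] _.
by apply/val_inj; apply/eqP; rewrite -leqn0.
Qed.

Lemma Vrec k : (0 < m)%N ->
  #|Vset c m n.+1 k.+1| = ((c + m * k) * #|Vset c m n k.+1| + #|Vset c m n k|)%N.
Proof.
move=> hm; rewrite Vset_ext card_imset; last exact: ext_inj.
rewrite /Sset card_sum.
transitivity (\sum_(Z1 : {ffun I -> I} * {ffun I -> color c m})
  \sum_(ab : J * color c m) (validg Z1 && condab Z1 ab &&
     (nfix Z1.1 + (ab.1 == ord_max) == k.+1) : nat))%N.
  by rewrite pair_bigA; apply: eq_bigr => -[a b].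
transitivity (\sum_(Z1 : {ffun I -> I} * {ffun I -> color c m})
  ((validg Z1 && (nfix Z1.1 == k.+1)) * (c + m * k) + (validg Z1 && (nfix Z1.1 == k))))%N.
  apply: eq_bigr => -[g0 f0] _.
  case hv: (validg (g0, f0)); last by rewrite big1.
  rewrite /= (eq_bigr (fun ab => (condab (g0, f0) ab && (nfix g0 + (ab.1 == ord_max) == k.+1)) : nat));
    last by move=> ab _.
  rewrite inner //; last exact: (valid0 hv).
  rewrite addn1 eqSS; congr (_ + _)%N.
  by case: eqP => [-> //|]; rewrite !mul0n.
rewrite big_split /= -big_distrl /= !card_sum mulnC; congr (_ * _ + _)%N.
Qed.

End PartB.

Import Order.TTheory GRing.Theory Num.Theory.
Local Open Scope ring_scope.

Section PartC.
Variables (R : realType) (c m : nat).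
Hypothesis hm : (0 < m)%N.

Definition v n j := #|Vset c m n j|.

Lemma v0 n : v n 0 = 0%N.
Proof.
apply/eqP; rewrite cards_eq0; apply/eqP/setP => X; rewrite !inE.
apply/negbTE; apply/negP => /andP [hX /eqP h0].
have : ord0 \in [set x | X.1 x == x] by rewrite inE (valid0 hX).
by move: h0; rewrite /nfix => /eqP; rewrite cards_eq0 => /eqP ->; rewrite inE.
Qed.

Lemma v_big n j : (n.+1 < j)%N -> v n j = 0%N.
Proof.
move=> hj; apply/eqP; rewrite cards_eq0; apply/eqP/setP => X; rewrite !inE.
apply/negbTE; apply/negP => /andP [_ /eqP h].
have := max_card [set x | X.1 x == x]; rewrite card_ord.
by rewrite -/(nfix X.1) h leqNgt hj.
Qed.

Definition P n : {poly R} := \poly_(k < n.+1) (v n k.+1)%:R.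

Lemma coefP n i : (P n)`_i = (v n i.+1)%:R.
Proof. by rewrite coef_poly; case: ifPn => // /negbTE; rewrite ltnNge => /negbFE h; rewrite v_big. Qed.

Lemma Prec n : P n.+1 = 'X * P n + c%:R%:P * P n + m%:R *: ('X * (P n)^`()).
Proof.
apply/polyP => i; rewrite !coefD coefP coefXM coefCM coefZ coefXM.
case: i => [|i] /=; rewrite ?coef_deriv !coefP.
  by rewrite /v Vrec // muln0 addn0 -/(v n 0) v0 addn0 natrM mulr0 add0r addr0.
rewrite /v Vrec // natrD natrM natrD natrM -mulr_natr.
by rewrite -/(v n i.+1) -/(v n i.+2); ring.
Qed.

End PartC.

Section PartD.
Variable R : realType.

Lemma sign_double (k : nat) : (-1) ^+ (k + k) = 1 :> R.
Proof. by rewrite -signr_odd addnn odd_double. Qed.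

Lemma path_last (x : R) E : path <%R x E -> x <= last x E.
Proof.
elim: E x => [|y E IH] x /=; first by rewrite lexx.
by case/andP => hxy /IH h; rewrite (le_trans (ltW hxy)).
Qed.

Lemma interlace (Q : {poly R}) (E : seq R) : forall (x : R) (b : nat),
  path <%R x E ->
  (forall j, (j <= size E)%N -> 0 < (-1) ^+ (b + j) * Q.[nth 0 (x :: E) j]) ->
  exists t, [/\ size t = size E, all (root Q) t, sorted <%R t,
     all (fun y => x < y) t & all (fun y => y < last x E) t].
Proof.
elim: E => [|y E IH] x b /=; first by move=> _ _; exists [::].
case/andP => hxy hp hs.
have h0 := hs 0%N isT; have h1 := hs 1%N isT; rewrite /= addn0 in h0.
have hneg : Q.[x] * Q.[y] < 0.
  have := mulr_gt0 h0 h1.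
  rewrite mulrACA -exprD addnA addnn addn1 -signr_odd /= odd_double /= expr1 mulN1r.
  by rewrite oppr_gt0.
have [t0 ht0 rt0] := poly_ivtoo (ltW hxy) hneg.
have ht0a : x < t0 by rewrite (itvP ht0).
have ht0b : t0 < y by rewrite (itvP ht0).
have [|t [st rt srt gt lt]] := IH y b.+1 hp.
  by move=> j hj; have := hs j.+1 hj; rewrite addnS -addSn.
exists (t0 :: t); split.
- by rewrite /= st.
- by rewrite /= rt0 rt.
- rewrite /= (path_sortedE (@lt_trans _ R)) srt andbT.
  by apply/allP => z hz; rewrite (lt_trans ht0b) //; exact: (allP gt z hz).
- rewrite /= ht0a /=; apply/allP => z hz.
  exact: (lt_trans hxy (allP gt z hz)).
- rewrite /= lt ?andbT //.
  by rewrite (lt_le_trans ht0b) // path_last.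
Qed.

Lemma deriv_root (s1 s2 : seq R) (z : R) :
  (\prod_(w <- s1 ++ z :: s2) ('X - w%:P))^`().[z] = \prod_(w <- s1 ++ s2) (z - w).
Proof.
rewrite !big_cat big_cons /= mulrCA derivM hornerD !hornerM.
rewrite hornerXsubC subrr mul0r addr0 derivXsubC hornerC mul1r.
by rewrite -hornerM -big_cat horner_prod -big_cat; apply: eq_bigr => w _; rewrite hornerXsubC.
Qed.


Lemma prod_neg_sign (z : R) r : all (fun w => z < w) r ->
  0 < (-1) ^+ (size r) * \prod_(w <- r) (z - w).
Proof.
elim: r => [|w r IH] /=; first by rewrite big_nil mulr1 expr0 ltr01.
case/andP => hw /IH hr; rewrite big_cons exprS.
rewrite mulrACA mulr_gt0 // mulN1r opprB subr_gt0 //.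
Qed.

Lemma prod_pos (z : R) r : all (fun w => w < z) r -> 0 < \prod_(w <- r) (z - w).
Proof.
elim: r => [|w r IH] /=; first by rewrite big_nil ltr01.
by case/andP => hw /IH hr; rewrite big_cons mulr_gt0 // subr_gt0.
Qed.

Lemma deriv_sign (s : seq R) i : sorted <%R s -> (i < size s)%N ->
  0 < (-1) ^+ (size s - i.+1) * (\prod_(w <- s) ('X - w%:P))^`().[nth 0 s i].
Proof.
move=> hs hi; set z := nth 0 s i.
have es : s = take i s ++ z :: drop i.+1 s by rewrite -drop_nth // cat_take_drop.
have hd := deriv_root (take i s) (drop i.+1 s) z; rewrite -es in hd; rewrite hd.
move: hs; rewrite (sorted_pairwise (@lt_trans _ R)) {1}es pairwise_cat pairwise_cons.
case/and3P => hrel _ /andP [hdrop _].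
rewrite big_cat /= mulrCA mulr_gt0 //; last by rewrite -size_drop prod_neg_sign.
apply: prod_pos; apply/allP => w hw.
by move: hrel; rewrite allrel_consr => /andP [/allP /(_ w hw)].
Qed.

End PartD.

Section PartE.
Variables (R : realType) (c m : nat).
Hypotheses (hc : (0 < c)%N) (hm : (0 < m)%N).

Lemma sgr_pos (u e : R) : Num.sg u = Num.sg e -> e != 0 -> 0 < e * u.
Proof.
move=> h he; rewrite (numEsg u) (numEsg e) h mulrACA -expr2 sqr_sg he mul1r.
have hu : u != 0 by rewrite -sgr_eq0 h sgr_eq0.
by rewrite mulr_gt0 // normr_gt0.
Qed.

Definition IH n := exists (a : R) (s : seq R),
  [/\ 0 < a, size s = n, sorted <%R s, all (fun x => x < 0) s &
      P R c m n = a *: \prod_(z <- s) ('X - z%:P)].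

Lemma base : IH 0.
Proof.
have hv : (0 < v c m 0 1)%N.
  apply/card_gt0P; exists ([ffun x => x], [ffun _ => inr (Ordinal hm)]).
  rewrite inE; apply/andP; split.
    apply/andP; split; apply/forallP => x; rewrite /= !ffunE ?eqxx ?leqnn //.
  rewrite /nfix /=; apply/eqP.
  rewrite -[RHS](card_ord 1); apply: eq_card => x; rewrite !inE ffunE eqxx.
  by [].
exists (v c m 0 1)%:R, [::]; split => //; first by rewrite ltr0n.
rewrite big_nil; apply/polyP => i; rewrite coefP coefZ coef1.
case: i => [|i]; first by rewrite mulr1.
by rewrite mulr0 v_big.
Qed.

Lemma path_y0 (s : seq R) (y0 : R) : sorted <%R s -> all (fun x => x < 0) s ->
  y0 <= head 0 s - 1 -> path <%R y0 (rcons s 0).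
Proof.
rewrite rcons_path; case: s => [|z s'] hsort hneg hy0b /=.
  by rewrite (le_lt_trans hy0b) // ltrBlDr add0r ltr01.
rewrite (le_lt_trans hy0b) ?ltrBlDr ?ltrDl ?ltr01 //=; move: hsort => /= -> /=.
by apply: (allP hneg (last z s')); rewrite mem_last.
Qed.

Lemma step n : IH n -> IH n.+1.
Proof.
case=> a [s [ha hsz hsort hneg hP]].
set p0 := \prod_(z <- s) ('X - z%:P) in hP.
set Q := P R c m n.+1.
have hp0m : p0 \is monic by apply: monic_prod_XsubC.
have hp0s : size p0 = n.+1 by rewrite size_prod_XsubC hsz.
have hQ x : Q.[x] = a * ((x + c%:R) * p0.[x] + m%:R * x * p0^`().[x]).
  rewrite /Q (Prec _ _ hm) hP derivZ.
  rewrite !(hornerD, hornerM, hornerZ, hornerX, hornerC); ring.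
have hcoef : Q`_n.+1 = a.
  rewrite /Q (Prec _ _ hm) !coefD coefXM coefCM coefZ coefXM /= coef_deriv !coefP.
  rewrite (@v_big c m n n.+2) // mulr0 mul0rn mulr0 !addr0.
  rewrite -coefP hP coefZ -[n in p0`_n]/(n.+1.-1) -hp0s -lead_coefE.
  by rewrite (monicP hp0m) mulr1.
have hsize : size Q = n.+2.
  rewrite /Q /P size_poly_eq //= -coefP -/(P R c m n.+1) -/Q hcoef.
  by rewrite gt_eqF.
have hlead : lead_coef Q = a by rewrite lead_coefE hsize.
have Qn0 : Q != 0 by rewrite -size_poly_gt0 hsize.
pose y0 := Num.min (- cauchy_bound Q) (head 0 s - 1).
have hy0a : y0 <= - cauchy_bound Q by rewrite ge_min lexx.
have hy0b : y0 <= head 0 s - 1 by rewrite ge_min lexx orbT.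
have hQy0 : 0 < (-1) ^+ n.+1 * Q.[y0].
  apply: sgr_pos; last by rewrite signr_eq0.
  rewrite (sgp_minftyP (le_cauchy_bound Qn0)); last by rewrite in_itv /= hy0a.
  by rewrite /sgp_minfty hsize hlead sgrM (gtr0_sg ha) mulr1.
have hp0root : forall i, (i < n)%N -> p0.[nth 0 s i] = 0.
  move=> i hi; apply/eqP; rewrite -/(root p0 _) root_prod_XsubC mem_nth //.
  by rewrite hsz.
have hE : path <%R y0 (rcons s 0).
  exact: path_y0.
have hsgn : forall j, (j <= size (rcons s 0%R))%N ->
    0 < (-1) ^+ (n.+1 + j) * Q.[nth 0 (y0 :: rcons s 0) j].
  case=> [|i]; first by rewrite addn0.
  rewrite size_rcons hsz ltnS /= nth_rcons hsz leq_eqVlt => /orP [/eqP ->|hi].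
    rewrite ltnn eqxx hQ horner_prod mulr0 mul0r addr0 add0r sign_double mul1r.
    rewrite (eq_bigr (fun w => 0 - w)); last by move=> w _; rewrite hornerXsubC.
    rewrite mulr_gt0 // mulr_gt0 ?ltr0n //.
    by apply: prod_pos; apply/allP => w hw; rewrite (allP hneg).
  rewrite hi hQ hp0root // mulr0 add0r.
  have e : (n.+1 + i.+1 = (n - i.+1).+1 + (i.+1 + i.+1))%N by lia.
  rewrite e exprD sign_double mulr1 exprS.
  have hd := deriv_sign hsort (i := i); rewrite hsz in hd; have {}hd := hd hi.
  have hsi : nth 0 s i < 0 by apply: (allP hneg); rewrite mem_nth // hsz.
  set S := (-1) ^+ (n - i.+1) in hd *; set d := p0^`().[nth 0 s i] in hd *.
  have -> : -1 * S * (a * (m%:R * nth 0 s i * d)) = (a * m%:R * (- nth 0 s i)) * (S * d) by ring.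
  by apply: mulr_gt0 => //; rewrite !mulr_gt0 ?ltr0n // ltrNr oppr0.
have [t [st rt srt _ lt]] := interlace hE hsgn.
rewrite last_rcons size_rcons hsz in lt st.
have ut : uniq t by apply: lt_sorted_uniq.
have [q eq] := uniq_roots_prod_XsubC rt (etrans (uniq_rootsE t) ut).
have hptm : \prod_(z <- t) ('X - z%:P) \is monic by apply: monic_prod_XsubC.
have qn0 : q != 0 by apply: contraNneq Qn0 => q0; rewrite eq q0 mul0r.
have hsq : size q = 1%N.
  have := size_Mmonic qn0 hptm; rewrite -eq hsize size_prod_XsubC st.
  by move=> h; move: h; rewrite addnS /= => /eqP; rewrite -[n.+2]/(1 + n.+1)%N eqn_add2r eq_sym => /eqP.
have [k kn0 ek] : exists2 k, k != 0 & q = k%:P by apply/size_poly1P; rewrite hsq.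
have eka : k = a by rewrite -hlead eq lead_coef_Mmonic // ek lead_coefC.
exists a, t; split => //.
by rewrite -/Q eq ek eka mul_polyC.
Qed.

End PartE.

Lemma IH_all (R : realType) (c m : nat) : (0 < c)%N -> (0 < m)%N -> forall n, IH R c m n.
Proof.
move=> hc hm; elim=> [|n IHn]; first exact: base.
exact: step.
Qed.

Unset Implicit Arguments.

Theorem theorem2 (R : realType) (c m n : nat) :
  (0 < c)%N -> (0 < m)%N -> (1 <= n)%N ->
  exists s : seq R,
    [/\ size s = n, uniq s, all (fun x => x < 0) s & all (root (Tpoly R c m n)) s].
Proof.
move=> hc hm _; have [a [s [ha hsz hsort hneg hP]]] := IH_all R hc hm n.
have eT : Tpoly R c m n = P R c m n.
  by rewrite /Tpoly /P; apply: eq_poly => k _; rewrite T_Vset.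
exists s; split => //; first exact: lt_sorted_uniq.
apply/allP => x hx; rewrite eT hP rootZ ?gt_eqF //.
by rewrite root_prod_XsubC.
Qed.
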